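(* Let $n,m\in\mathbb Z$, $k\le n+m$, and $a,b,q,p\in\mathbb C$ with $|p|<1$. Then \[ \binom{n+m}{k}_{a,b;q,p}=\sum_{j=k-m}^{n}\binom nj_{a,b;q,p}\binom{m}{k-j}_{aq^{2n-j},bq^{n+j};q,p}\prod_{i=1}^{k-j}W_{a,b;q,p}(i+j,n-j). \]
   Context: $\theta(x;p)=\prod_{j\ge0}(1-p^jx)(1-p^{j+1}/x)$, $\theta(x_1,\dots,x_\ell;p)=\prod_i\theta(x_i;p)$; parameters are such that denominators below do not vanish. Sum convention: $\sum_{j=l}^mA_j=A_l+\dots+A_m$ if $m>l-1$, $0$ if $m=l-1$, $-A_{l-1}-\dots-A_{m+1}$ if $m<l-1$. Product convention: $\prod_{j=l}^mA_j=A_l\cdots A_m$ if $m>l-1$, $1$ if $m=l-1$, $A_{l-1}^{-1}\cdots A_{m+1}^{-1}$ if $m<l-1$. For parameters $(a,b)$: $w_{a,b;q,p}(s,t)=\frac{\theta(aq^{s+2t},bq^{2s+t-2},aq^{t-s-1}/b;p)}{\theta(aq^{s+2t-2},bq^{2s+t},aq^{t-s+1}/b;p)}q$, $W_{a,b;q,p}(s,t)=\prod_{j=1}^tw_{a,b;q,p}(s,j)$, and $\binom nk_{a,b;q,p}$ ($n,k\in\mathbb Z$) is the unique family with $\binom n0_{a,b;q,p}=\binom nn_{a,b;q,p}=1$ and $\binom{n+1}k_{a,b;q,p}=\binom nk_{a,b;q,p}+\binom n{k-1}_{a,b;q,p}W_{a,b;q,p}(k,n+1-k)$ for $(n+1,k)\ne(0,0)$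 (closed form $\frac{(q^{1+k},aq^{1+k},bq^{1+k},aq^{1-k}/b;q,p)_{n-k}}{(q,aq,bq^{1+2k},aq/b;q,p)_{n-k}}$ with $(x;q,p)_r=\prod_{i=0}^{r-1}\theta(xq^i;p)$). The coefficient $\binom{\cdot}{\cdot}_{aq^{2n-j},bq^{n+j};q,p}$ is this with $(a,b)$ replaced by $(aq^{2n-j},bq^{n+j})$. *)

(* Defs.v *)
(* complex numbers are R[i] = complex R for an arbitrary
   realType R (mathcomp-real-closed's complex); for R the real numbers this is C. *)
From Stdlib Require Import ClassicalEpsilon.
From mathcomp Require Import all_boot all_order all_algebra.
From mathcomp Require Import complex.
From mathcomp Require Import reals.
Set Implicit Arguments. Unset Strict Implicit. Unset Printing Implicit Defensive.
Import Order.TTheory GRing.Theory Num.Theory.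
Local Open Scope ring_scope.
Local Open Scope complex_scope.

Section EllipticBinomial.
Variable R : realType.
Local Notation C := R[i].

Definition cvgC (u : nat -> C) (L : C) : Prop :=
  forall e : R, 0 < e -> exists N : nat, forall M : nat, (N <= M)%N -> `|u M - L| < e%:C.

Definition theta_partial (x p : C) (N : nat) : C :=
  \prod_(j < N) ((1 - p ^+ j * x) * (1 - p ^+ j.+1 / x)).

(* theta(x;p) := the limit of the partial products (it exists for |p|<1, x<>0) *)
Definition theta (x p : C) : C :=
  epsilon (inhabits 0) (cvgC (theta_partial x p)).

Definition zprod (l m : int) (A : int -> C) : C :=
  if (l - 1 <= m)%R then \prod_(i < (absz (m - l + 1)%R)) A (l + Posz i)%R
  else \prod_(i < (absz (l - 1 - m)%R)) (A (m + 1 + Posz i)%R)^-1.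

Definition zsum (l m : int) (A : int -> C) : C :=
  if (l - 1 <= m)%R then \sum_(i < (absz (m - l + 1)%R)) A (l + Posz i)%R
  else - \sum_(i < (absz (l - 1 - m)%R)) A (m + 1 + Posz i)%R.

Definition ew (a b q p : C) (s t : int) : C :=
  (theta (a * q ^ (s + 2 * t)) p * theta (b * q ^ (2 * s + t - 2)) p
     * theta (a * q ^ (t - s - 1) / b) p)
  / (theta (a * q ^ (s + 2 * t - 2)) p * theta (b * q ^ (2 * s + t)) p
     * theta (a * q ^ (t - s + 1) / b) p) * q.

Definition eW (a b q p : C) (s t : int) : C := zprod 1 t (fun j => ew a b q p s j).

Definition is_ebinom_family (a b q p : C) (F : int -> int -> C) : Prop :=
  (forall n : int, F n 0 = 1) /\ (forall n : int, F n n = 1) /\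
  (forall n k : int, (n + 1, k) <> (0, 0) ->
     F (n + 1) k = F n k + F n (k - 1) * eW a b q p k (n + 1 - k)).

Definition ebinom (a b q p : C) : int -> int -> C :=
  epsilon (inhabits (fun _ _ => 0)) (is_ebinom_family a b q p).

End EllipticBinomial.

(* Main.v *)
Require Import Defs.
From Stdlib Require Import ClassicalEpsilon.
From mathcomp Require Import all_boot all_order all_algebra.
From mathcomp Require Import complex.
From mathcomp Require Import reals.
From mathcomp Require Import zify ring.
Import Order.TTheory GRing.Theory Num.Theory.
Local Open Scope ring_scope.
Local Open Scope complex_scope.

Section Gen.
Variable R : realType.
Local Notation C := R[i].

Lemma zprod_pos (f : int -> C) (n : nat) : zprod 1 (Posz n) f = \prod_(i < n) f (1 + Posz i).
Proof.
rewrite /zprod. have -> : (1 - 1 <= Posz n :> int) = true by lia.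
have -> : absz (Posz n - 1 + 1) = n by lia. by [].
Qed.

Lemma zprod_neg (f : int -> C) (n : nat) : zprod 1 (Negz n) f = \prod_(i < n.+1) (f (Negz n + 1 + Posz i))^-1.
Proof.
rewrite /zprod. have -> : (1 - 1 <= Negz n :> int) = false by lia.
have -> : absz (1 - 1 - Negz n) = n.+1 by lia. by [].
Qed.

Lemma zprod0 (f : int -> C) : zprod 1 0 f = 1.
Proof. by rewrite (zprod_pos f 0) big_ord0. Qed.

Lemma zprodS (f : int -> C) (t : int) : (forall i, f i != 0) ->
  zprod 1 (t + 1) f = zprod 1 t f * f (t + 1).
Proof.
move=> hf; case: t => [n|n].
- have -> : Posz n + 1 = Posz n.+1 by lia.
  rewrite !zprod_pos big_ord_recr /=. congr (_ * f _); lia.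
- case: n => [|n].
  + have -> : Negz 0 + 1 = 0 by lia.
    rewrite zprod0 zprod_neg big_ord_recr big_ord0 /= mul1r.
    have -> : Negz 0 + 1 + 0 = 0 by lia.
    by rewrite mulVf.
  + have -> : Negz n.+1 + 1 = Negz n by lia.
    rewrite !zprod_neg [in RHS]big_ord_recl /=.
    rewrite -mulrA mulrC.
    have -> : Negz n.+1 + 1 + 0 = Negz n by lia.
    rewrite -mulrA mulfV // mulr1. apply: eq_bigr => i _. congr (f _)^-1.
    rewrite /bump /=. lia.
Qed.

Lemma zprodS' (f : int -> C) (t t' : int) : (forall i, f i != 0) -> t' = t + 1 ->
  zprod 1 t' f = zprod 1 t f * f t'.
Proof. by move=> hf ->; apply: zprodS. Qed.

Lemma zprod_neq0 (f : int -> C) l m : (forall i, f i != 0) -> zprod l m f != 0.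
Proof.
move=> hf; rewrite /zprod; case: ifP => _; apply/prodf_neq0 => i _ //.
by rewrite invr_eq0.
Qed.

Lemma zprod_ext (f g : int -> C) l m : (forall i, f i = g i) -> zprod l m f = zprod l m g.
Proof. by move=> h; rewrite /zprod; case: ifP => _; apply: eq_bigr => i _; rewrite h. Qed.

Lemma int_ind2 (P : int -> Prop) : P 0 -> (forall t, P t -> P (t + 1)) ->
  (forall t, P (t + 1) -> P t) -> forall t, P t.
Proof.
move=> h0 hS hP; case=> n.
- elim: n => // n IH. have -> : Posz n.+1 = Posz n + 1 by lia. exact: hS.
- elim: n => [|n IH]; apply: hP.
  + by have -> : Negz 0 + 1 = 0 by lia.
  + by have -> : Negz n.+1 + 1 = Negz n by lia.
Qed.

Lemma zprod_shift (f : int -> C) (c t : int) : (forall i, f i != 0) ->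
  zprod 1 t (fun l => f (l + c)) * zprod 1 c f = zprod 1 (c + t) f.
Proof.
move=> hf; elim/int_ind2: t.
- by rewrite zprod0 mul1r addr0.
- move=> t IH. rewrite zprodS // (@zprodS' f (c + t) (c + (t + 1))) //; last by lia.
  rewrite -IH mulrAC. congr (_ * f _). lia.
- move=> t IH. move: IH. rewrite zprodS // (@zprodS' f (c + t) (c + (t + 1))) //; last by lia.
  have -> : t + 1 + c = c + (t + 1) by lia.
  rewrite mulrAC => /mulIf; apply. done.
Qed.

Lemma zsum_L (g : int -> C) l m (L : nat) : m = l + Posz L - 1 ->
  zsum l m g = \sum_(i < L) g (l + Posz i).
Proof.
move=> ->; rewrite /zsum. have -> : (l - 1 <= l + Posz L - 1) = true by lia.
have -> : absz (l + Posz L - 1 - l + 1) = L by lia. by [].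
Qed.


Definition fam (W : int -> int -> C) (F : int -> int -> C) : Prop :=
  (forall n : int, F n 0 = 1) /\ (forall n : int, F n n = 1) /\
  (forall n k : int, (n + 1, k) <> (0, 0) ->
     F (n + 1) k = F n k + F n (k - 1) * W k (n + 1 - k)).

Lemma fam_neg W F : (forall s t, W s t != 0) -> fam W F ->
  forall (d N : nat), F (Posz N) (Negz d) = 0.
Proof.
move=> hW [h0 [hd hr]]; elim=> [|d IH] N.
- have := hr (Posz N) 0. rewrite h0 h0.
  have -> : (0 - 1 : int) = Negz 0 by lia.
  move=> /(_ _) H. have {H} : 1 = 1 + F N (Negz 0) * W 0 (Posz N + 1 - 0).
    by apply: H; case; lia.
  move/esym/eqP; rewrite addrC -subr_eq0 addrK mulf_eq0 (negbTE (hW _ _)) orbF.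
  by move/eqP.
- have := hr (Posz N) (Negz d).
  have -> : Posz N + 1 = Posz N.+1 by lia.
  rewrite !IH. have -> : Negz d - 1 = Negz d.+1 by lia.
  move=> /(_ _) H. have {H} : 0 = 0 + F N (Negz d.+1) * W (Negz d) (Posz N.+1 - Negz d).
    by apply: H; case; lia.
  move/eqP; rewrite eq_sym add0r mulf_eq0 (negbTE (hW _ _)) orbF.
  by move/eqP.
Qed.

Section Exist.
Variable W : int -> int -> C.
Hypothesis hW0 : forall s, W s 0 = 1.
Hypothesis hWn : forall s t, W s t != 0.

Fixpoint fwd (N : nat) : int -> C :=
  match N with
  | 0 => fun k => if k == 0 then 1 else 0
  | N'.+1 => fun k => fwd N' k + fwd N' (k - 1) * W k (Posz N'.+1 - k)
  end.

Section Row.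
Variables (r : int -> C) (N : int) (c : C).
Fixpoint up (i : nat) : C :=
  match i with
  | 0 => 1
  | i'.+1 => r (Posz i'.+1) - up i' * W (Posz i'.+1) (N + 1 - Posz i'.+1)
  end.
Fixpoint down (i : nat) : C :=
  match i with
  | 0 => c
  | i'.+1 => (r (Negz i') - down i') / W (Negz i') (N + 1 - Negz i')
  end.
Definition mkrow (k : int) : C :=
  match k with Posz i => up i | Negz i => down i end.

Lemma mkrow0 : mkrow 0 = 1. Proof. by []. Qed.
Lemma mkrow_rec k : k != 0 -> r k = mkrow k + mkrow (k - 1) * W k (N + 1 - k).
Proof.
case: k => [[|i]|i] hk //.
- have -> : Posz i.+1 - 1 = Posz i by lia.
  by rewrite /= subrK.
- have -> : Negz i - 1 = Negz i.+1 by lia.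
  by rewrite /= divfK // addrC subrK.
Qed.
End Row.

Lemma mkrow_m1 r N c : mkrow r N c (-1) = c. Proof. by []. Qed.

Fixpoint bwd (i : nat) : int -> C :=
  match i with
  | 0 => mkrow (fwd 0) (Negz 0) 1
  | i'.+1 => mkrow (bwd i') (Negz i'.+1) ((bwd i' 0 - 1) / W 0 (Negz i'))
  end.

Lemma fwd_supp N k : (k < 0) || (Posz N < k) -> fwd N k = 0.
Proof.
elim: N k => [|N IH] k hk /=.
- by case: ifP => // /eqP e; move: hk; rewrite e.
- rewrite !IH ?mul0r ?addr0 //; lia.
Qed.

Lemma fwd0 N : fwd N 0 = 1.
Proof. elim: N => //= N ->. by rewrite fwd_supp ?mul0r ?addr0. Qed.

Lemma fwdd N : fwd N (Posz N) = 1.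
Proof.
elim: N => //= N IH. rewrite fwd_supp; last by lia.
have -> : Posz N.+1 - 1 = Posz N by lia.
by rewrite IH subrr hW0 add0r mulr1.
Qed.

Lemma bwd0 i : bwd i 0 = 1. Proof. by case: i. Qed.

Lemma bwd_prop i : bwd i (Negz i) = 1 /\ (forall k, Negz i < k < 0 -> bwd i k = 0).
Proof.
elim: i => [|i [IHd IHz]].
- split; first by []. move=> k; lia.
- have hc : (bwd i 0 - 1) / W 0 (Negz i) = 0 by rewrite bwd0 subrr mul0r.
  have hdown : forall d, (d <= i)%N -> down (bwd i) (Negz i.+1) ((bwd i 0 - 1) / W 0 (Negz i)) d = 0.
    elim=> [|d IH] hd; first by rewrite /= hc.
    rewrite /= IH ?IHz ?subrr ?mul0r //; first lia. lia.
  split.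
  + rewrite /= hdown // IHd subr0.
    have -> : Negz i.+1 + 1 - Negz i = 0 by lia.
    by rewrite hW0 divr1.
  + case=> [n|d] hk; first lia.
    rewrite /= hdown //. lia.
Qed.

Definition Fex (n : int) : int -> C :=
  match n with Posz N => fwd N | Negz i => bwd i end.

Lemma Fex_fam : fam W Fex.
Proof.
split; first by case=> [N|i] /=; [exact: fwd0 | exact: bwd0].
split; first by case=> [N|i] /=; [exact: fwdd | exact: (bwd_prop i).1].
move=> n k; case: n => [N|[|i]] hnk.
- have -> : Posz N + 1 = Posz N.+1 by lia. by [].
- have -> : Negz 0 + 1 = 0 by lia.
  rewrite /=. apply: mkrow_rec. apply/eqP => e; apply: hnk; rewrite e. congr pair; lia.
- have e : Negz i.+1 + 1 = Negz i by lia.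
  rewrite {1}e /=. have [->|k0] := eqVneq k 0.
  + have -> : (0 - 1 : int) = Negz 0 by lia.
    by rewrite e subr0 /= divfK ?hWn // addrC subrK.
  + exact: mkrow_rec.
Qed.

End Exist.

Section Main.
Variables (W : int -> int -> C) (F : int -> int -> C) (Wj : int -> int -> int -> C)
  (G : int -> int -> int -> C) (n : int).
Hypothesis hW0 : forall s, W s 0 = 1.
Hypothesis hWn : forall s t, W s t != 0.
Hypothesis hF : fam W F.
Hypothesis hG : forall j, fam (Wj j) (G j).
Hypothesis hsh : forall j s t, Wj j s t * W (s + j) (n - j) = W (s + j) (n - j + t).

Lemma hWjn j s t : Wj j s t != 0.
Proof.
apply/negP => /eqP e. have := hWn (s + j) (n - j + t). by rewrite -hsh e mul0r eqxx.
Qed.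

Definition S m k j := F n j * G j m (k - j) * zprod 1 (k - j) (fun i => W (i + j) (n - j)).
Definition RR m k := zsum (k - m) n (S m k).

Lemma P_step j k : zprod 1 (k - j) (fun i => W (i + j) (n - j)) =
  zprod 1 (k - 1 - j) (fun i => W (i + j) (n - j)) * W k (n - j).
Proof.
rewrite (@zprodS' _ (k - 1 - j) (k - j)) //; last by lia.
by have -> : k - j + j = k by lia.
Qed.

Lemma head m k j : k - j = m + 1 -> S (m + 1) k j = W k (n + m + 1 - k) * S m (k - 1) j.
Proof.
move=> e; rewrite /S P_step e.
have -> : k - 1 - j = m by lia.
have -> : n - j = n + m + 1 - k by lia.
have [_ [hd _]] := hG j. rewrite !hd. ring.
Qed.

Lemma tail m k j : k - j <= m -> S (m + 1) k j = S m k j + W k (n + m + 1 - k) * S m (k - 1) j.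
Proof.
move=> hkj; rewrite /S P_step.
have [_ [_ hr]] := hG j.
rewrite hr; last by case; lia.
have h := hsh j (k - j) (m + 1 - (k - j)).
have e1 : k - j + j = k by lia.
have e2 : n - j + (m + 1 - (k - j)) = n + m + 1 - k by lia.
rewrite e1 e2 in h. rewrite -h.
have -> : k - j - 1 = k - 1 - j by lia.
ring.
Qed.

Lemma RRstep m k : k <= n + m + 1 -> RR (m + 1) k = RR m k + W k (n + m + 1 - k) * RR m (k - 1).
Proof.
move=> hk; set L := absz (n - k + m + 1).
rewrite /RR.
have -> : k - 1 - m = k - (m + 1) by lia.
rewrite (@zsum_L _ (k - (m + 1)) n L.+1); last by lia.
rewrite (@zsum_L _ (k - (m + 1)) n L.+1); last by lia.
rewrite (@zsum_L _ (k - m) n L); last by lia.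
rewrite !big_ord_recl mulrDr mulr_sumr.
rewrite /= addr0 head; last by lia.
rewrite [X in _ = _ + (_ + X)](eq_bigr (fun i : 'I_L => W k (n + m + 1 - k) * S m (k - 1) (k - m + Posz i))); last first.
  move=> i _; congr (_ * S _ _ _). have -> : bump 0 i = i.+1 by []. lia.
rewrite (eq_bigr (fun i : 'I_L => S m k (k - m + Posz i) + W k (n + m + 1 - k) * S m (k - 1) (k - m + Posz i))); last first.
  move=> i _. rewrite -tail; last by lia.
  congr (S _ _ _). have -> : bump 0 i = i.+1 by []. lia.
rewrite big_split /=. ring.
Qed.

Lemma RRedge m : RR m (n + m + 1) = 0.
Proof. by rewrite /RR (@zsum_L _ _ n 0) ?big_ord0 //; lia. Qed.

Lemma RRbase k : k <= n -> RR 0 k = F n k.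
Proof.
move=> hk; rewrite /RR (@zsum_L _ (k - 0) n (absz (n - k)).+1); last by lia.
rewrite big_ord_recl big1 ?addr0.
- rewrite /=.
  have [h0 _] := hG k.
  by rewrite /S subrr h0 zprod0 !mulr1.
- move=> i _. rewrite /S.
  set j := (k + _).
  have -> : k - j = Negz (absz (j - k) - 1)%N by rewrite /j lift0; lia.
  by rewrite (@fam_neg (Wj j) (G j) (@hWjn j) (hG j) _ 0) mulr0 mul0r.
Qed.

Lemma fwdstep m : (forall k, k <= n + m -> RR m k = F (n + m) k) ->
  forall k, k <= n + (m + 1) -> RR (m + 1) k = F (n + (m + 1)) k.
Proof.
move=> IH k hk. rewrite RRstep; last by lia.
have [h0 [hd hr]] := hF.
have -> : n + (m + 1) = n + m + 1 by lia.
have [ek|nk] := eqVneq k (n + m + 1).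
- rewrite ek RRedge add0r hd.
  have -> : n + m + 1 - (n + m + 1) = 0 by lia.
  have -> : n + m + 1 - 1 = n + m by lia.
  by rewrite hW0 mul1r IH // hd.
- rewrite hr; last by case; lia.
  rewrite !IH; [|lia|lia]. by rewrite mulrC.
Qed.

Lemma bwdstep m : (forall k, k <= n + (m + 1) -> RR (m + 1) k = F (n + (m + 1)) k) ->
  forall k, k <= n + m -> RR m k = F (n + m) k.
Proof.
move=> H.
have [h0 [hd hr]] := hF.
have H' : forall k, k <= n + m + 1 -> RR (m + 1) k = F (n + m + 1) k.
  move=> k hk; have -> : n + m + 1 = n + (m + 1) by lia. apply: H; lia.
suff: forall d : nat, RR m (n + m - Posz d) = F (n + m) (n + m - Posz d).
  move=> hs k hk. have -> : k = n + m - Posz (absz (n + m - k)%R) by lia. exact: hs.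
elim=> [|d IH].
- have h := RRstep m (n + m + 1) ltac:(lia).
  rewrite H' in h; last by lia.
  rewrite hd RRedge in h.
  have e1 : n + m + 1 - (n + m + 1) = 0 by lia.
  have e2 : n + m + 1 - 1 = n + m by lia.
  rewrite e1 e2 hW0 add0r mul1r in h.
  have -> : n + m - Posz 0 = n + m by lia.
  by rewrite -h hd.
- set k := n + m - Posz d.
  have -> : n + m - Posz d.+1 = k - 1 by rewrite /k; lia.
  have h := RRstep m k ltac:(rewrite /k; lia).
  rewrite H' in h; last by rewrite /k; lia.
  rewrite hr in h; last by rewrite /k; case; lia.
  rewrite IH (mulrC (F _ (k - 1))) in h.
  by move/addrI/(mulfI (hWn _ _)): h.
Qed.

Lemma main_gen m k : k <= n + m -> RR m k = F (n + m) k.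
Proof.
move: k; elim/int_ind2: m.
- move=> k; rewrite addr0; exact: RRbase.
- move=> m IH; exact: fwdstep.
- move=> m IH; exact: bwdstep.
Qed.

End Main.

Lemma qA (a q : C) A B E : q != 0 -> E = A + B -> a * q ^ A * q ^ B = a * q ^ E.
Proof. by move=> hq ->; rewrite expfzDr // mulrA. Qed.

Lemma qC (a b q : C) A B D E : q != 0 -> E = A + B - D ->
  a * q ^ A * q ^ B / (b * q ^ D) = a * q ^ E / b.
Proof.
move=> hq ->; rewrite expfzDr // expfzDr // -invr_expz invfM. ring.
Qed.

Lemma ebinom_fam (a b q p : C) : (forall s t, ew a b q p s t != 0) ->
  fam (eW a b q p) (ebinom a b q p).
Proof.
move=> hew.
have hW0 : forall s, eW a b q p s 0 = 1 by move=> s; exact: zprod0.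
have hWn : forall s t, eW a b q p s t != 0 by move=> s t; exact: zprod_neq0.
have hex := @Fex_fam (eW a b q p) hW0 hWn.
rewrite /ebinom. exact: (epsilon_spec _ _ (ex_intro _ _ hex)).
Qed.

End Gen.

Theorem corollary5 (R : realType) (n m k : int) (a b q p : R[i]) :
  k <= n + m ->
  `|p| < 1 ->
  a != 0 -> b != 0 -> q != 0 ->
  (forall s t : int,
     theta (a * q ^ (s + 2 * t - 2)) p * theta (b * q ^ (2 * s + t)) p
       * theta (a * q ^ (t - s + 1) / b) p != 0) ->
  ebinom a b q p (n + m) k =
  zsum (k - m) n (fun j =>
    ebinom a b q p n j
    * ebinom (a * q ^ (2 * n - j)) (b * q ^ (n + j)) q p m (k - j)
    * zprod 1 (k - j) (fun i => eW a b q p (i + j) (n - j))).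
Proof.
move=> hk hp ha hb hq hth.
have hA : forall x, theta (a * q ^ x) p != 0.
  move=> x; have := hth (x + 2) 0.
  have -> : x + 2 + 2 * 0 - 2 = x by lia.
  by rewrite !mulf_eq0 !negb_or => /andP [/andP [h _] _].
have hB : forall y, theta (b * q ^ y) p != 0.
  move=> y; have := hth 0 y.
  have -> : 2 * 0 + y = y by lia.
  by rewrite !mulf_eq0 !negb_or => /andP [/andP [_ h] _].
have hC : forall z, theta (a * q ^ z / b) p != 0.
  move=> z; have := hth 0 (z - 1).
  have -> : z - 1 - 0 + 1 = z by lia.
  by rewrite !mulf_eq0 !negb_or => /andP [_ h].
have hew : forall s t, ew a b q p s t != 0.
  move=> s t; rewrite /ew.
  by rewrite !mulf_neq0 ?invr_neq0 ?mulf_neq0.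
have hshift : forall j s t, ew (a * q ^ (2 * n - j)) (b * q ^ (n + j)) q p s t
    = ew a b q p (s + j) (t + (n - j)).
  move=> j s t; rewrite /ew.
  congr (theta _ p * theta _ p * theta _ p / (theta _ p * theta _ p * theta _ p) * q).
  - apply: qA => //; lia.
  - apply: qA => //; lia.
  - apply: qC => //; lia.
  - apply: qA => //; lia.
  - apply: qA => //; lia.
  - apply: qC => //; lia.
have hW0 : forall s, eW a b q p s 0 = 1 by move=> s; exact: zprod0.
have hWn : forall s t, eW a b q p s t != 0 by move=> s t; exact: zprod_neq0.
have hF := @ebinom_fam R a b q p hew.
have hG : forall j, fam R (eW (a * q ^ (2 * n - j)) (b * q ^ (n + j)) q p)
                        (ebinom (a * q ^ (2 * n - j)) (b * q ^ (n + j)) q p).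
  move=> j; apply: ebinom_fam => s t; rewrite hshift; exact: hew.
have hsh : forall j s t, eW (a * q ^ (2 * n - j)) (b * q ^ (n + j)) q p s t
    * eW a b q p (s + j) (n - j) = eW a b q p (s + j) (n - j + t).
  move=> j s t. rewrite /eW.
  rewrite (@zprod_ext R _ (fun l => ew a b q p (s + j) (l + (n - j)))); last first.
    by move=> i; rewrite hshift.
  exact: zprod_shift.
have H := (@main_gen R (eW a b q p) (ebinom a b q p)
  (fun j => eW (a * q ^ (2 * n - j)) (b * q ^ (n + j)) q p)
  (fun j => ebinom (a * q ^ (2 * n - j)) (b * q ^ (n + j)) q p) n hW0 hWn hF hG hsh m k hk).
rewrite /RR /S in H. rewrite -H. by [].
Qed.
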